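(* Let $\mathbb{K}$ be an algebraically closed field with $\operatorname{char}(\mathbb{K})\neq 2$. Let \[ A=\frac{\mathbb{K}\langle x_1,x_2,x_3,x_4\rangle}{\langle g_1,\ldots,g_6\rangle}, \] where \[ g_1=x_1x_2-x_2x_1,\quad g_2=x_2x_3-x_3x_2,\quad g_3=x_1x_3-x_3x_1,\quad g_4=x_1x_4-x_4x_1, \] \[ g_5=x_2x_4-x_4x_2,\quad g_6=x_3x_4-x_4x_3-x_1^2+x_2x_3. \] Then the point scheme of $A$ is $\mathcal{V}\big(x_1(x_1^2-x_2x_3),\,x_2(x_1^2-x_2x_3)\big)\subset\mathbb{P}^3$, which contains the double line $\mathcal{V}(x_1,x_2)$.
   Context: Point scheme: for a quadratic algebra $A=\mathbb{K}\langle x_1,\dots,x_4\rangle/\langle g_1,\dots,g_6\rangle$ with each $g_i=\sum_{j,k}c_{ijk}x_jx_k$ homogeneous of degree 2, let $D$ be the $6\times 4$ matrix with entries $D_{ik}=\sum_j c_{ijk}x_j$ (linear forms in $x_1,\dots,x_4$), so that $g_i(\alpha,\beta):=\sum_{j,k}c_{ijk}\alpha_j\beta_k=(D(\alpha)\beta)_i$ for $(\alpha,\beta)\in\mathbb{P}^3\times\mathbb{P}^3$. The point scheme of $A$ is the subscheme of $\mathbb{P}^3$ (homogeneous coordinates $x_1,\dots,x_4$) defined by the vanishing of all $4\times 4$ minors of $D$; its points are the $\alpha\in\mathbb{P}^3$ for which there exists $\beta\in\mathbb{P}^3$ with $g_i(\alpha,\beta)=0$ for all $i$. For homogeneous polynomials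 $f_1,\dots,f_r$, $\mathcal{V}(f_1,\dots,f_r)$ denotes their zero locus (subscheme) in $\mathbb{P}^3$. *)

(* Defs.v *)
From HB Require Import structures.
From mathcomp Require Import all_boot all_algebra.
From mathcomp Require Import mpoly.
Set Implicit Arguments.
Unset Strict Implicit.
Unset Printing Implicit Defensive.
Import GRing.Theory.
Local Open Scope ring_scope.

(* A quadratic noncommutative relation g = sum c * x_j x_k is encoded as a
   list of terms (c, j, k) (0-based indices: x_1 is index 0). *)
Definition qterm := (int * nat * nat)%type.

Definition quad_coef (K : nzRingType) (rels : seq (seq qterm)) (i j k : nat) : K :=
  \sum_(t <- nth [::] rels i | (t.1.2 == j) && (t.2 == k)) t.1.1%:~R.

Definition Dmat (K : fieldType) (m n : nat) (c : 'I_m -> 'I_n -> 'I_n -> K)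
  : 'M[{mpoly K[n]}]_(m, n) :=
  \matrix_(i, k) \sum_(j < n) (c i j k)%:MP * 'X_j.

(* All n x n minors of D (row selections f; non-injective ones give 0). *)
Definition minors_gens (K : fieldType) (m n : nat) (c : 'I_m -> 'I_n -> 'I_n -> K)
  : seq {mpoly K[n]} :=
  [seq \det (rowsub (fun r => f r) (Dmat c)) | f : {ffun 'I_n -> 'I_m}].

Definition in_ideal (R : comNzRingType) (gs : seq R) (p : R) : Prop :=
  exists cs : seq R, p = \sum_(i < size gs) cs`_i * gs`_i.

Definition in_saturation (K : fieldType) (n : nat) (gs : seq {mpoly K[n]})
  (p : {mpoly K[n]}) : Prop :=
  exists e : nat, forall mo : 'X_{1..n}, mdeg mo = e -> in_ideal gs ('X_[mo] * p).

(* Closed subschemes V(gs1), V(gs2) of P^{n-1} (gs homogeneous) coincide *)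
Definition same_subscheme (K : fieldType) (n : nat) (gs1 gs2 : seq {mpoly K[n]}) :=
  forall p, in_saturation gs1 p <-> in_saturation gs2 p.

(* V(gsZ) is a closed subscheme of V(gsW) *)
Definition subscheme_of (K : fieldType) (n : nat) (gsZ gsW : seq {mpoly K[n]}) :=
  forall p, in_saturation gsW p -> in_saturation gsZ p.

Definition point_scheme_gens (K : fieldType) (m n : nat) (rels : seq (seq qterm))
  : seq {mpoly K[n]} :=
  minors_gens (fun (i : 'I_m) (j k : 'I_n) => quad_coef K rels i j k).

Definition A_rels : seq (seq qterm) :=
  [:: [:: (1%Z, 0, 1); (-1%Z, 1, 0)];
      [:: (1%Z, 1, 2); (-1%Z, 2, 1)];
      [:: (1%Z, 0, 2); (-1%Z, 2, 0)];
      [:: (1%Z, 0, 3); (-1%Z, 3, 0)];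
      [:: (1%Z, 1, 3); (-1%Z, 3, 1)];
      [:: (1%Z, 2, 3); (-1%Z, 3, 2); (-1%Z, 0, 0); (1%Z, 1, 2)] ].

(* coordinate x_{i+1} of P^3 *)
Definition xv (K : fieldType) (i : nat) : {mpoly K[4]} := 'X_(inord i).

(* Main.v *)
Require Import Defs.
From HB Require Import structures.
From mathcomp Require Import all_boot all_algebra.
From mathcomp Require Import mpoly.
From mathcomp Require Import ring.
Import GRing.Theory.
Local Open Scope ring_scope.

Lemma det_rec (R : comNzRingType) n (A : 'M[R]_n.+1) :
  \det A = \sum_(j < n.+1) A 0 j * ((-1) ^+ j * \det (row' 0 (col' j A))).
Proof. by rewrite (expand_det_row _ 0); apply: eq_bigr => j _; rewrite /cofactor add0n. Qed.

Definition det4 (R : comNzRingType) (a : nat -> nat -> R) : R :=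
  0 + (a 0%N 0%N * a 1%N 1%N * a 2%N 2%N * a 3%N 3%N)
  - (a 0%N 0%N * a 1%N 1%N * a 2%N 3%N * a 3%N 2%N)
  - (a 0%N 0%N * a 1%N 2%N * a 2%N 1%N * a 3%N 3%N)
  + (a 0%N 0%N * a 1%N 2%N * a 2%N 3%N * a 3%N 1%N)
  + (a 0%N 0%N * a 1%N 3%N * a 2%N 1%N * a 3%N 2%N)
  - (a 0%N 0%N * a 1%N 3%N * a 2%N 2%N * a 3%N 1%N)
  - (a 0%N 1%N * a 1%N 0%N * a 2%N 2%N * a 3%N 3%N)
  + (a 0%N 1%N * a 1%N 0%N * a 2%N 3%N * a 3%N 2%N)
  + (a 0%N 1%N * a 1%N 2%N * a 2%N 0%N * a 3%N 3%N)
  - (a 0%N 1%N * a 1%N 2%N * a 2%N 3%N * a 3%N 0%N)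
  - (a 0%N 1%N * a 1%N 3%N * a 2%N 0%N * a 3%N 2%N)
  + (a 0%N 1%N * a 1%N 3%N * a 2%N 2%N * a 3%N 0%N)
  + (a 0%N 2%N * a 1%N 0%N * a 2%N 1%N * a 3%N 3%N)
  - (a 0%N 2%N * a 1%N 0%N * a 2%N 3%N * a 3%N 1%N)
  - (a 0%N 2%N * a 1%N 1%N * a 2%N 0%N * a 3%N 3%N)
  + (a 0%N 2%N * a 1%N 1%N * a 2%N 3%N * a 3%N 0%N)
  + (a 0%N 2%N * a 1%N 3%N * a 2%N 0%N * a 3%N 1%N)
  - (a 0%N 2%N * a 1%N 3%N * a 2%N 1%N * a 3%N 0%N)
  - (a 0%N 3%N * a 1%N 0%N * a 2%N 1%N * a 3%N 2%N)
  + (a 0%N 3%N * a 1%N 0%N * a 2%N 2%N * a 3%N 1%N)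
  + (a 0%N 3%N * a 1%N 1%N * a 2%N 0%N * a 3%N 2%N)
  - (a 0%N 3%N * a 1%N 1%N * a 2%N 2%N * a 3%N 0%N)
  - (a 0%N 3%N * a 1%N 2%N * a 2%N 0%N * a 3%N 1%N)
  + (a 0%N 3%N * a 1%N 2%N * a 2%N 1%N * a 3%N 0%N).

Lemma det4E (R : comNzRingType) (a : nat -> nat -> R) :
  \det (\matrix_(i < 4, j < 4) a i j) = @det4 R a.
Proof.
rewrite !(det_rec, big_ord_recl, big_ord0) !det_mx00 !mxE /= /bump /= /det4.
ring.
Qed.

Section E.
Variable K : fieldType.
Local Notation R := {mpoly K[4]}.
Local Notation x := (@xv K).

Definition Ee (i k : nat) : R :=
  match i, k with
  | 0,0 => - x 1%N | 0,1 => x 0%N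
  | 1,1 => - x 2%N | 1,2 => x 1%N
  | 2,0 => - x 2%N | 2,2 => x 0%N
  | 3,0 => - x 3%N | 3,3 => x 0%N
  | 4,1 => - x 3%N | 4,3 => x 1%N
  | 5,0 => - x 0%N | 5,2 => x 1%N - x 3%N | 5,3 => x 2%N
  | _,_ => 0 end.

Definition Em : 'M[R]_(6,4) := \matrix_(i, k) Ee i k.

Lemma xvE (j : 'I_4) : 'X_j = x j :> R.
Proof. by rewrite /xv inord_val. Qed.

Lemma DmatE : Dmat (fun (i : 'I_6) (j k : 'I_4) => quad_coef K A_rels i j k) = Em.
Proof.
apply/matrixP => i k; rewrite !mxE !big_ord_recl big_ord0 !xvE /=.
case: i => [[|[|[|[|[|[|i]]]]]] Hi] //; case: k => [[|[|[|[|k]]]] Hk] //=;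
rewrite /quad_coef /= ?big_cons ?big_nil /= ?mpolyC0 ?mul0r ?add0r ?addr0 //=.
all: try (rewrite ?mpolyCN ?mpolyC1 ?mulN1r ?mul1r ?addr0 ?add0r //).
all: idtac.
Qed.
End E.
Arguments Ee : clear implicits.
Arguments Em : clear implicits.

Section Ideal.
Variable R : comNzRingType.
Implicit Types (gs : seq R) (p : R).

Lemma inI0 gs : in_ideal gs 0.
Proof. by exists [::]; rewrite big1 // => i _; rewrite nth_nil mul0r. Qed.

Lemma inI_add gs a b : in_ideal gs a -> in_ideal gs b -> in_ideal gs (a + b).
Proof.
move=> [c1 ->] [c2 ->]; exists (mkseq (fun i => c1`_i + c2`_i) (size gs)).
by rewrite -big_split; apply: eq_bigr => i _; rewrite nth_mkseq // mulrDl.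
Qed.

Lemma inI_mull gs c a : in_ideal gs a -> in_ideal gs (c * a).
Proof.
move=> [c1 ->]; exists (mkseq (fun i => c * c1`_i) (size gs)).
by rewrite mulr_sumr; apply: eq_bigr => i _; rewrite nth_mkseq // mulrA.
Qed.

Lemma inI_mem gs g : g \in gs -> in_ideal gs g.
Proof.
move=> hg; exists (mkseq (fun i => ((i == index g gs) : nat)%:R) (size gs)).
have hi : (index g gs < size gs)%N by rewrite index_mem.
rewrite (bigD1 (Ordinal hi)) //= nth_mkseq // eqxx mul1r nth_index //.
rewrite big1 ?addr0 // => i /eqP hne; rewrite nth_mkseq //.
case: eqP => [h|_]; last by rewrite mul0r.
by exfalso; apply: hne; apply: val_inj.
Qed.

Lemma inI_sub gs gs' p : (forall g, g \in gs -> in_ideal gs' g) ->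
  in_ideal gs p -> in_ideal gs' p.
Proof.
move=> H [cs ->]; apply: (big_ind (fun q => in_ideal gs' q)) => //.
- exact: inI0.
- by move=> a b; apply: inI_add.
- by move=> i _; apply: inI_mull; apply: H; apply: mem_nth.
Qed.

Lemma inI_map gs c p : in_ideal gs p -> in_ideal (map (fun g => g * c) gs) (p * c).
Proof.
move=> [cs ->]; exists cs; rewrite size_map mulr_suml.
by apply: eq_bigr => i _; rewrite (nth_map 0) // mulrA.
Qed.

Lemma inI_eq gs c a b : in_ideal gs a -> b = c * a -> in_ideal gs b.
Proof. by move=> h ->; apply: inI_mull. Qed.
End Ideal.

Lemma sat_mono (K : fieldType) n (gs gs' : seq {mpoly K[n]}) p :
  (forall g, g \in gs -> in_ideal gs' g) -> in_saturation gs p -> in_saturation gs' p.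
Proof. by move=> H [e He]; exists e => mo hmo; apply: inI_sub H (He mo hmo). Qed.

Lemma sat_shift (K : fieldType) n (gs gs' : seq {mpoly K[n]}) p :
  (forall g (k : 'I_n), g \in gs -> in_ideal gs' ('X_k * g)) ->
  in_saturation gs p -> in_saturation gs' p.
Proof.
move=> H [e He]; exists e.+1 => mo hmo.
case: (pickP (fun i => mo i != 0%N)) => [k hk|h0]; last first.
  move: hmo; rewrite mdegE big1 // => i _.
  by move: (h0 i) => /= /negbFE /eqP.
have hle : (U_(k) <= mo)%MM by rewrite lep1mP.
have hmo' : mdeg (mo - U_(k))%MM = e.
  by move: hmo; rewrite -{1}(submK hle) mdegD mdeg1 addn1 => -[].
rewrite -(submK hle) mpolyXD -mulrA mulrCA.
case: (He _ hmo') => cs ->; rewrite mulr_sumr.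
apply: (big_ind (fun q => in_ideal gs' q)) => //.
- exact: inI0.
- by move=> a b; apply: inI_add.
- by move=> i _; rewrite mulrCA; apply: inI_mull; apply: H; apply: mem_nth.
Qed.

Section S.
Variable K : fieldType.
Local Notation R := {mpoly K[4]}.
Local Notation x := (@xv K).
Local Notation fF := (x 0%N ^+ 2 - x 1%N * x 2%N).
Local Notation psg := (@point_scheme_gens K 6 4 A_rels).

Definition sel (a b c d : nat) (ha : (a < 6)%N) (hb : (b < 6)%N) (hc : (c < 6)%N) (hd : (d < 6)%N) :
  {ffun 'I_4 -> 'I_6} :=
  [ffun i : 'I_4 => match val i with 0 => Ordinal ha | 1 => Ordinal hb | 2 => Ordinal hc | _ => Ordinal hd end].

Lemma rowsub_sel a b c d ha hb hc hd :
  rowsub (fun r => (@sel a b c d ha hb hc hd) r) (Em K) =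
  \matrix_(i < 4, j < 4) Ee K (nth 0%N [:: a; b; c; d] i) j.
Proof.
apply/matrixP => i j; rewrite !mxE ffunE.
by case: i => [[|[|[|[|i]]]] Hi].
Qed.

Lemma detsel a b c d ha hb hc hd :
  \det (rowsub (fun r => (@sel a b c d ha hb hc hd) r) (Em K)) =
  @det4 _ (fun n m => Ee K (nth 0%N [:: a; b; c; d] n) m).
Proof. by rewrite rowsub_sel (@det4E _ (fun n m => Ee K (nth 0%N [:: a; b; c; d] n) m)). Qed.

Lemma inI_minor (F : {ffun 'I_4 -> 'I_6}) :
  in_ideal psg (\det (rowsub (fun r => F r) (Em K))).
Proof.
apply: inI_mem; rewrite /point_scheme_gens /minors_gens DmatE.
by apply: (image_f (fun f : {ffun 'I_4 -> 'I_6} => \det (rowsub (fun r => f r) (Em K)))).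
Qed.

Definition vx : 'cV[R]_4 := \col_(j < 4) x j.

Lemma Emv (i : 'I_6) : (Em K *m vx) i 0 = if val i == 5%N then - fF else 0.
Proof.
rewrite !mxE !big_ord_recl big_ord0 !mxE /= /bump /=.
by case: i => [[|[|[|[|[|[|i]]]]]] Hi] //=; ring.
Qed.

Lemma EJ (i : 'I_6) (c : 'I_4) : val i != 5%N -> (2 <= c)%N ->
  in_ideal [:: x 0%N; x 1%N] (Em K i c).
Proof.
rewrite mxE; case: i => [[|[|[|[|[|[|i]]]]]] Hi] //=; case: c => [[|[|[|[|c]]]] Hc] //= _ _;
 try exact: inI0; apply: inI_mem; by rewrite !inE eqxx ?orbT.
Qed.

Lemma F1 (F : {ffun 'I_4 -> 'I_6}) (k : 'I_4) :
  in_ideal [:: x 0%N * fF; x 1%N * fF] ('X_k * \det (rowsub (fun r => F r) (Em K))).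
Proof.
set M := rowsub _ _.
case: (boolP (injectiveb F)) => [/injectiveP Finj | /injectivePn [r1 [r2 hne heq]]]; last first.
  rewrite (determinant_alternate hne) ?mulr0; first exact: inI0.
  by move=> j; rewrite !mxE heq.
have E1 : (\det M)%:M *m vx = \adj M *m (M *m vx) by rewrite mulmxA mul_adj_mx.
have Hk : \det M * x k = \sum_r \adj M k r * (M *m vx) r 0.
  have := congr1 (fun A : 'M[R]_(4,1) => A k 0) E1; rewrite /= mul_scalar_mx mxE [vx k 0]mxE => ->.
  by rewrite mxE.
rewrite xvE (mulrC (x k)) Hk.
apply: (big_ind (fun q => in_ideal _ q)) => //.
- exact: inI0.
- by move=> a b; apply: inI_add.
move=> r _.
have -> : (M *m vx) r 0 = (Em K *m vx) (F r) 0.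
  by rewrite !mxE; apply: eq_bigr => j _; rewrite !mxE.
rewrite Emv; case: eqP => hr; last by rewrite mulr0; apply: inI0.
have hJ : in_ideal [:: x 0%N; x 1%N] (\det (row' r (col' k M))).
  rewrite (expand_det_col _ (@Ordinal 3 2 isT)).
  apply: (big_ind (fun q => in_ideal _ q)) => //.
  - exact: inI0.
  - by move=> a b; apply: inI_add.
  move=> i _; rewrite mulrC; apply: inI_mull.
  have -> : row' r (col' k M) i (@Ordinal 3 2 isT) = Em K (F (lift r i)) (lift k (@Ordinal 3 2 isT)) by rewrite !mxE.
  apply: EJ.
    apply/eqP => h5; have : F (lift r i) = F r by apply: val_inj; rewrite h5 hr.
    by move/Finj => /eqP; rewrite eq_sym (negbTE (neq_lift r i)).
  by rewrite /= /bump; case: (k <= 2)%N.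
rewrite mxE /cofactor mulrN -mulrA -mulNr.
apply: inI_mull; move: (@inI_map _ _ fF _ hJ) => /= h; exact: h.
Qed.

Lemma F2 g (k : 'I_4) : g \in [:: x 0%N * fF; x 1%N * fF] -> in_ideal psg ('X_k * g).
Proof.
rewrite !inE => /orP [] /eqP ->; rewrite xvE; case: k => [[|[|[|[|k]]]] Hk] //=.
- apply: (@inI_eq _ _ (1) _ _ (inI_minor (@sel 0 2 3 5 isT isT isT isT))); rewrite detsel /det4 /=; ring.
- apply: (@inI_eq _ _ (1) _ _ (inI_minor (@sel 0 1 3 5 isT isT isT isT))); rewrite detsel /det4 /=; ring.
- apply: (@inI_eq _ _ (-1) _ _ (inI_minor (@sel 1 2 3 5 isT isT isT isT))); rewrite detsel /det4 /=; ring.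
- apply: (@inI_eq _ _ (-1) _ _ (inI_minor (@sel 2 3 4 5 isT isT isT isT))); rewrite detsel /det4 /=; ring.
- apply: (@inI_eq _ _ (1) _ _ (inI_minor (@sel 0 1 3 5 isT isT isT isT))); rewrite detsel /det4 /=; ring.
- apply: (@inI_eq _ _ (1) _ _ (inI_minor (@sel 0 1 4 5 isT isT isT isT))); rewrite detsel /det4 /=; ring.
- apply: (@inI_eq _ _ (-1) _ _ (inI_minor (@sel 1 2 4 5 isT isT isT isT))); rewrite detsel /det4 /=; ring.
- apply: (@inI_eq _ _ (-1) _ _ (inI_minor (@sel 1 3 4 5 isT isT isT isT))); rewrite detsel /det4 /=; ring.
Qed.

Lemma F3 g : g \in [:: x 0%N * fF; x 1%N * fF] ->
  in_ideal [:: x 0%N ^+ 2; x 0%N * x 1%N; x 1%N ^+ 2] g.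
Proof.
rewrite !inE => /orP [] /eqP ->.
- by exists [:: x 0%N; - x 2%N; 0]; rewrite /= !big_ord_recl big_ord0 /=; ring.
- by exists [:: 0; x 0%N; - x 2%N]; rewrite /= !big_ord_recl big_ord0 /=; ring.
Qed.

Lemma F1' g (k : 'I_4) : g \in psg -> in_ideal [:: x 0%N * fF; x 1%N * fF] ('X_k * g).
Proof.
rewrite /point_scheme_gens /minors_gens DmatE => /imageP [F _ ->]; exact: F1.
Qed.
End S.

Theorem proposition6 (K : closedFieldType) (hchar : (2 : K) != 0) :
  let x := @xv K in
  let f := x 0%N ^+ 2 - x 1%N * x 2%N in
  same_subscheme (@point_scheme_gens K 6 4 A_rels) [:: x 0%N * f; x 1%N * f] /\
  subscheme_of [:: x 0%N ^+ 2; x 0%N * x 1%N; x 1%N ^+ 2]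
               (@point_scheme_gens K 6 4 A_rels).
Proof.
move=> x f; rewrite /x /f; split.
  move=> p; split; apply: sat_shift; [exact: F1' | exact: F2].
move=> p hp. have H3 := @F3 K. have H1 := @F1' K. apply: (@sat_mono K 4 _ _ p H3). exact: (@sat_shift K 4 _ _ p H1 hp).
Qed.
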